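(* Let $f_0,f_1$ be real polynomials with $f_1\neq0$ and $\deg f_1<\deg f_0$, and let $R=f_1/f_0$. Run the modified Euclidean algorithm $f_{k-1}=d_kf_k-f_{k+1}$ with $\deg f_{k+1}<\deg f_k$ for $k=1,\dots,m$, where $f_{m+1}=0$ (so $d_1,\dots,d_m$ are real polynomials and $$-R=-\cfrac{1}{d_1-\cfrac{1}{d_2-\cfrac{1}{\ddots-\cfrac{1}{d_m}}}}\ ).$$ Then $$\operatorname{Ind}_{\mathbb{P}\mathbb{R}}(R)=-\sum_{k=1}^m\operatorname{Ind}_\infty(d_k).$$
   Context: For a real rational function $R$ and a real pole $\omega_0$ of $R$ of odd order, $\operatorname{Ind}_{\omega_0}(R)=+1$ if $R(\omega_0-0)<0<R(\omega_0+0)$ and $-1$ if $R(\omega_0-0)>0>R(\omega_0+0)$; $\operatorname{Ind}_{-\infty}^{+\infty}(R)$ is the sum of these over all real poles of $R$ of odd order. Writing $R=f_1/f_0$, $R$ has a pole at $\infty$ of order $\deg f_1-\deg f_0$ when positive; if this order is odd, $\operatorname{Ind}_\infty(R)=+1$ if $R(+\infty)<0<R(-\infty)$ and $-1$ if $R(+\infty)>0>R(-\infty)$; otherwise $0$. $\operatorname{Ind}_{\mathbb{P}\mathbb{R}}(R)=\operatorname{Ind}_{-\infty}^{+\infty}(R)+\operatorname{Ind}_\infty(R)$. For a polynomial $d(\omega)=c\omega^\nu+\dots$: $\operatorname{Ind}_\infty(d)=-\operatorname{sign}c$ if $\nu$ is odd and $0$ if $\nu$ is even. *)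

(* Defs.v *)
From HB Require Import structures.
From mathcomp Require Import all_boot all_order all_algebra.
From mathcomp Require Import polyrcf.
From mathcomp Require Import boolp.
Set Implicit Arguments. Unset Strict Implicit. Unset Printing Implicit Defensive.
Import Order.TTheory GRing.Theory Num.Theory.
Local Open Scope ring_scope.

Section CauchyIndex.
Variable R : rcfType.

Definition ratf (f1 f0 : {poly R}) (x : R) : R := f1.[x] / f0.[x].

(* sign of g just left / just right of a, i.e. the sign of g(a-0), g(a+0) *)
Definition sgn_left (g : R -> R) (a s : R) : Prop :=
  exists2 e : R, 0 < e & forall x, a - e < x < a -> 0 < s * g x.
Definition sgn_right (g : R -> R) (a s : R) : Prop :=
  exists2 e : R, 0 < e & forall x, a < x < a + e -> 0 < s * g x.
Definition sgn_pinfty (g : R -> R) (s : R) : Prop :=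
  exists M : R, forall x, M < x -> 0 < s * g x.
Definition sgn_ninfty (g : R -> R) (s : R) : Prop :=
  exists M : R, forall x, x < M -> 0 < s * g x.

(* order of the pole of f1/f0 at a real point a (a pole iff positive) *)
Definition pole_order (f1 f0 : {poly R}) (a : R) : int :=
  (mup a f0)%:Z - (mup a f1)%:Z.

Definition odd_pole (f1 f0 : {poly R}) (a : R) : bool :=
  (0 < pole_order f1 f0 a) && odd `|pole_order f1 f0 a|%N.

Definition Ind_at (f1 f0 : {poly R}) (a : R) : int :=
  if odd_pole f1 f0 a then
    if `[< sgn_left (ratf f1 f0) a (-1) /\ sgn_right (ratf f1 f0) a 1 >] then 1
    else if `[< sgn_left (ratf f1 f0) a 1 /\ sgn_right (ratf f1 f0) a (-1) >]
    then -1 else 0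
  else 0.

(* Ind_{-oo}^{+oo}(f1/f0): sum over real poles of odd order; all real poles
   are real roots of f0, enumerated without repetition by rootsR f0 *)
Definition Ind_line (f1 f0 : {poly R}) : int :=
  \sum_(a <- rootsR f0) Ind_at f1 f0 a.

Definition pole_order_inf (f1 f0 : {poly R}) : int :=
  (size f1)%:Z - (size f0)%:Z.

Definition Ind_inf (f1 f0 : {poly R}) : int :=
  if (0 < pole_order_inf f1 f0) && odd `|pole_order_inf f1 f0|%N then
    if `[< sgn_pinfty (ratf f1 f0) (-1) /\ sgn_ninfty (ratf f1 f0) 1 >] then 1
    else if `[< sgn_pinfty (ratf f1 f0) 1 /\ sgn_ninfty (ratf f1 f0) (-1) >]
    then -1 else 0
  else 0.

Definition Ind_PR (f1 f0 : {poly R}) : int := Ind_line f1 f0 + Ind_inf f1 f0.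

Definition Ind_inf_poly (d : {poly R}) : int := Ind_inf d 1.

End CauchyIndex.

(* Main.v *)
Require Import Defs.
From HB Require Import structures.
From mathcomp Require Import all_boot all_order all_algebra.
From mathcomp Require Import polyrcf polyorder qe_rcf_th lra zify.
From mathcomp Require Import boolp.
Import Order.TTheory GRing.Theory Num.Theory Num.Def.
Local Open Scope ring_scope.

Section S.
Variable R : rcfType.
Implicit Types p q : {poly R}.

Lemma mup_mu (x : R) p : mup x p = \mu_x p.
Proof.
have [->|p0] := eqVneq p 0.
  rewrite mu0; apply/eqP; rewrite -leqn0.
  rewrite /mup; case: arg_maxnP => //=.
  by move=> [i hi] /= _ _; move: hi; rewrite size_poly0; case: i.
apply/eqP; rewrite eqn_leq; apply/andP; split.
  by rewrite -root_le_mu // -mup_geq.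
by rewrite mup_geq // root_le_mu.
Qed.


Lemma sg_pos (v s : R) : Num.sg v = s -> s != 0 -> 0 < s * v.
Proof.
move=> <- h; rewrite -normrEsg normr_gt0.
by apply: contraNneq h => ->; rewrite sgr0.
Qed.

Lemma sgn_right_uniq (g : R -> R) a : sgn_right g a 1 -> sgn_right g a (-1) -> False.
Proof.
move=> [e1 e1p h1] [e2 e2p h2].
have hm : 0 < minr e1 e2 by rewrite lt_min e1p.
have m1 : minr e1 e2 <= e1 by rewrite ge_min lexx.
have m2 : minr e1 e2 <= e2 by rewrite ge_min lexx orbT.
set y := a + minr e1 e2 / 2.
have := h1 y; have := h2 y; rewrite /y.
move: (minr e1 e2) hm m1 m2 => m *; lra.
Qed.

Lemma sgn_left_uniq (g : R -> R) a : sgn_left g a 1 -> sgn_left g a (-1) -> False.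
Proof.
move=> [e1 e1p h1] [e2 e2p h2].
have hm : 0 < minr e1 e2 by rewrite lt_min e1p.
have m1 : minr e1 e2 <= e1 by rewrite ge_min lexx.
have m2 : minr e1 e2 <= e2 by rewrite ge_min lexx orbT.
set y := a - minr e1 e2 / 2.
have := h1 y; have := h2 y; rewrite /y.
move: (minr e1 e2) hm m1 m2 => m *; lra.
Qed.

Lemma sgn_pinfty_uniq (g : R -> R) : sgn_pinfty g 1 -> sgn_pinfty g (-1) -> False.
Proof.
move=> [M1 h1] [M2 h2].
have m1 : M1 <= maxr M1 M2 by rewrite le_max lexx.
have m2 : M2 <= maxr M1 M2 by rewrite le_max lexx orbT.
have := h1 (maxr M1 M2 + 1); have := h2 (maxr M1 M2 + 1).
move: (maxr M1 M2) m1 m2 => m *; lra.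
Qed.

Lemma sgn_ninfty_uniq (g : R -> R) : sgn_ninfty g 1 -> sgn_ninfty g (-1) -> False.
Proof.
move=> [M1 h1] [M2 h2].
have m1 : minr M1 M2 <= M1 by rewrite ge_min lexx.
have m2 : minr M1 M2 <= M2 by rewrite ge_min lexx orbT.
have := h1 (minr M1 M2 - 1); have := h2 (minr M1 M2 - 1).
move: (minr M1 M2) m1 m2 => m *; lra.
Qed.


Lemma Ind_at_jump q p x : q != 0 -> p != 0 -> Ind_at q p x = jump q p x.
Proof.
move=> q0 p0.
rewrite /Ind_at /odd_pole /pole_order !mup_mu /jump q0 /=.
have [le|lt] := leqP (\mu_x p) (\mu_x q).
  have -> : (0 < (\mu_x p)%:Z - (\mu_x q)%:Z) = false.
    by apply/negbTE; rewrite -leNgt subr_le0 lez_nat.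
  rewrite (_ : (_ - _)%N = 0%N) ?mulr0n //; apply/eqP; rewrite subn_eq0 //.
rewrite subzn; last exact: ltnW.
rewrite ltz_nat subn_gt0 lt /=.
case: (boolP (odd _)) => hodd /=; last by rewrite mulr0n.
rewrite mulr1n.
have qp0 : q * p != 0 by rewrite mulf_neq0.
set s := sgp_right (q * p) x.
have s0 : s != 0 by rewrite /s sgp_right_eq0.
set nr := next_root (q * p) x (x + 1).
set pr := prev_root (q * p) (x - 1) x.
have hr : forall y, x < y < nr -> Num.sg (ratf q p y) = s.
  move=> y hy; have hy' : y \in neighpr (q * p) x (x+1) by rewrite /neighpr in_itv /=.
  by rewrite /s -(sgr_neighpr hy') /ratf hornerM sgrM sgrM sgrV.
have hl : forall y, pr < y < x -> Num.sg (ratf q p y) = - s.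
  move=> y hy; have hy' : y \in neighpl (q * p) (x - 1) x by rewrite /neighpl in_itv /=.
  rewrite /s /ratf sgrM sgrV -sgrM -hornerM (sgr_neighpl hy') mu_mul //.
  move: hodd; rewrite oddB ?(ltnW lt) // oddD addbC => ->.
  by rewrite expr1 mulN1r.
have e1p : 0 < nr - x by rewrite subr_gt0 next_root_gt // ltrDl ltr01.
have e2p : 0 < x - pr.
  by rewrite subr_gt0 prev_root_lt // ltrBlDr ltrDl ltr01.
have SR t : s = t -> t != 0 -> sgn_right (ratf q p) x t.
  move=> st t0; exists (nr - x) => // y hy; apply: sg_pos => //.
  by rewrite hr -?st //; move: hy; rewrite addrC subrK.
have SL t : s = t -> t != 0 -> sgn_left (ratf q p) x (- t).
  move=> st t0; exists (x - pr) => // y hy; apply: sg_pos; last by rewrite oppr_eq0.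
  by rewrite hl -?st //; move: hy; rewrite opprB addrC subrK.
have Hy0 : x < x + (nr - x) / 2 < nr by apply/andP; split; lra.
move: (hr _ Hy0); case: sgrP => _ hs.
- by rewrite -hs eqxx in s0.
- rewrite asboolT; last first.
    by split; [apply: SL | apply: SR]; rewrite -?hs ?oner_eq0.
  by rewrite -hs ltr10 expr0.
- rewrite asboolF; last first.
    move=> [_ h]; apply: (@sgn_right_uniq (ratf q p) x h).
    by apply: SR; rewrite -?hs ?oppr_eq0 ?oner_eq0.
  rewrite asboolT; last first.
    split; last by apply: SR; rewrite -?hs ?oppr_eq0 ?oner_eq0.
    by rewrite -[1]opprK; apply: SL; rewrite -?hs ?oppr_eq0 ?oner_eq0.
  by rewrite -hs ltrN10 expr1.
Qed.


Lemma Ind_inf_proper q p : (size q < size p)%N -> Ind_inf q p = 0.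
Proof.
move=> h; rewrite /Ind_inf /pole_order_inf.
have -> : (0 < (size q)%:Z - (size p)%:Z) = false.
  by apply/negbTE; rewrite -leNgt subr_le0 lez_nat ltnW.
by [].
Qed.

Lemma Ind_inf_poly_val (d : {poly R}) : d != 0 ->
  Ind_inf_poly d = if odd (size d).-1 then - sgz (lead_coef d) else 0.
Proof.
move=> d0; rewrite /Ind_inf_poly /Ind_inf /pole_order_inf size_poly1.
have sd : (0 < size d)%N by rewrite size_poly_gt0.
rewrite subzn // subn1.
case: (boolP (odd _)) => hodd; last by rewrite andbF.
move: hodd; rewrite /= => hodd.
rewrite ltz_nat (_ : (0 < (size d).-1)%N) /=; last by move: hodd; case: (size d).-1.
set cb := cauchy_bound d.
have hp : forall y, cb < y -> Num.sg (ratf d 1 y) = Num.sg (lead_coef d).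
  move=> y hy; rewrite /ratf hornerC divr1.
  by apply: (sgp_pinftyP (ge_cauchy_bound d0)); rewrite in_itv /= andbT ltW.
have hm : forall y, y < - cb -> Num.sg (ratf d 1 y) = - Num.sg (lead_coef d).
  move=> y hy; rewrite /ratf hornerC divr1.
  rewrite (sgp_minftyP (le_cauchy_bound d0)); last by rewrite in_itv /= ltW.
  by rewrite /sgp_minfty -signr_odd hodd expr1 mulN1r sgrN.
have SP t : Num.sg (lead_coef d) = t -> t != 0 -> sgn_pinfty (ratf d 1) t.
  by move=> ht t0; exists cb => y hy; apply: sg_pos => //; rewrite hp.
have SM t : Num.sg (lead_coef d) = t -> t != 0 -> sgn_ninfty (ratf d 1) (- t).
  move=> ht t0; exists (- cb) => y hy; apply: sg_pos; last by rewrite oppr_eq0.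
  by rewrite hm // ht.
have l0 : lead_coef d != 0 by rewrite lead_coef_eq0.
case: sgrP l0 SP SM => // hl _ SP SM.
- rewrite asboolF; last first.
    move=> [h _]; apply: (@sgn_pinfty_uniq (ratf d 1)); last exact: h.
    by apply: SP; rewrite ?oner_eq0.
  rewrite asboolT ?gtr0_sgz //.
  by split; [apply: SP | apply: SM]; rewrite ?oner_eq0.
- rewrite asboolT ?ltr0_sgz ?opprK //.
  split; first by apply: SP; rewrite ?oppr_eq0 ?oner_eq0.
  by have := SM (-1) erefl; rewrite opprK oppr_eq0 oner_eq0; apply.
Qed.


Lemma crossR_step p q (d r : {poly R}) : q != 0 -> (size r < size q)%N ->
  (size q < size p)%N -> p = d * q - r -> crossR (p * q) = - Ind_inf_poly d.
Proof.
move=> q0 hr hq hp.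
have dq : d * q = p + r by rewrite hp subrK.
have sdq : size (d * q) = size p by rewrite dq size_addl // (ltn_trans hr hq).
have ldq : lead_coef (d * q) = lead_coef p by rewrite dq lead_coefDl // (ltn_trans hr hq).
have p0 : p != 0 by rewrite -size_poly_gt0 (leq_ltn_trans _ hq).
have d0 : d != 0.
  by apply/eqP => d0; move: sdq hq; rewrite d0 mul0r size_poly0 => <-; rewrite ltn0.
rewrite (@Ind_inf_poly_val d d0).
rewrite /crossR /variation /sgp_minfty /sgp_pinfty.
have lpq : lead_coef (p * q) = lead_coef d * lead_coef q * lead_coef q.
  by rewrite lead_coefM -ldq lead_coefM.
have spq : (size (p * q)).-1 = ((size d).-1 + 2 * (size q).-1)%N.
  have := size_mul d0 q0; have := size_mul p0 q0; rewrite sdq.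
  have : (0 < size d)%N by rewrite size_poly_gt0.
  have : (0 < size q)%N by rewrite size_poly_gt0.
  move: (size d) (size q) (size p) (size (p * q)) => a b c e.
  case: a => // a; case: b => // b _ _ /= -> -> /=.
  rewrite !(addnS, addSn) /=; lia.
have hc : Num.sg (lead_coef d * lead_coef q * lead_coef q) = Num.sg (lead_coef d).
  by rewrite !sgrM -mulrA -expr2 sqr_sg lead_coef_eq0 q0 mulr1.
rewrite lpq spq -signr_odd oddD oddM /= addbF.
case: (odd (size d).-1).
  rewrite expr1 mulN1r sgrN hc sgz_sgr opprK.
  have l0 : lead_coef d != 0 by rewrite lead_coef_eq0.
  case: sgrP l0 => // _ _.
    by rewrite mulr1 ltrN10 /= mulr1.
  by rewrite opprK mul1r ltrN10 /= mulr1.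
rewrite (_ : (-1) ^+ false = 1 :> R) // mul1r hc.
have l0 : lead_coef d != 0 by rewrite lead_coef_eq0.
by case: sgrP l0 => // _ _; rewrite ?mulr1 ?mulrNN ?mulr1 ltr10 /= mulr0 oppr0.
Qed.


Lemma cindexR_step p q (d r : {poly R}) : q != 0 -> (size r < size q)%N ->
  p = d * q - r -> cindexR q p = crossR (p * q) + cindexR r q.
Proof.
move=> q0 hr hp; rewrite cindexR_rec; congr (_ + _).
have lq0 : lead_coef q != 0 by rewrite lead_coef_eq0.
set c := lead_coef q ^+ Pdiv.Ring.rscalp p q.
have c0 : c != 0 by rewrite expf_neq0.
have hm : Pdiv.Ring.rmodp p q = c *: (p %% q).
  by rewrite modpE scalerA mulrV ?scale1r // unitfE.
have hm2 : p %% q = - r.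
  by rewrite hp modpD modp_mull add0r modp_small // size_opp.
rewrite /next_mod -/c hm hm2 !scalerN scalerA mulNr scaleNr opprK.
rewrite /cindexR; apply: eq_bigr => x _.
rewrite jump_mulCp gtr0_sgz ?mul1r //.
by rewrite lt0r mulf_neq0 //= -expr2 sqr_ge0.
Qed.

End S.

Lemma telescope (g c : nat -> int) m :
  (forall k, (1 <= k <= m)%N -> g k = c k + g k.+1) -> g m.+1 = 0 ->
  g 1%N = \sum_(1 <= k < m.+1) c k.
Proof.
move=> hg h0.
suff H : forall n, (n <= m)%N -> g (m.+1 - n)%N = \sum_(m.+1 - n <= k < m.+1) c k.
  by have := H m (leqnn m); rewrite subSnn.
elim=> [_|n IH hn]; first by rewrite subn0 big_geq.
have e : (m.+1 - n.+1)%N = (m - n)%N by [].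
rewrite e big_ltn; last by lia.
rewrite hg; last by apply/andP; split; lia.
have e2 : (m - n).+1 = (m.+1 - n)%N by lia.
by rewrite e2 -IH //; lia.
Qed.

Theorem theorem60 (R : rcfType) (f0 f1 : {poly R}) (m : nat)
    (f d : nat -> {poly R})
    (hf1 : f1 != 0) (hdeg : (size f1 < size f0)%N)
    (hf0 : f 0%N = f0) (hf1' : f 1%N = f1)
    (heuc : forall k : nat, (1 <= k <= m)%N ->
        f k.-1 = d k * f k - f k.+1 /\ (size (f k.+1) < size (f k))%N)
    (hend : f m.+1 = 0) :
  Ind_PR f1 f0 = - \sum_(1 <= k < m.+1) Ind_inf_poly (d k).
Proof.
have f0nz : f0 != 0 by rewrite -size_poly_gt0 (leq_ltn_trans _ hdeg).
rewrite /Ind_PR Ind_inf_proper // addr0 /Ind_line.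
rewrite (eq_bigr (fun a => jump f1 f0 a)); last by move=> a _; rewrite Ind_at_jump.
rewrite -/(cindexR f1 f0).
have fk0 : forall k, (1 <= k <= m)%N -> f k != 0.
  by move=> k /heuc [_ h]; rewrite -size_poly_gt0 (leq_ltn_trans _ h).
have sk : forall k, (1 <= k <= m)%N -> (size (f k) < size (f k.-1))%N.
  move=> k /andP [k1 km]; case: k k1 km => // -[|k] _ km.
    by rewrite /= hf0 hf1'.
  by have [_ h] := heuc k.+1 (ltnW km); rewrite /=.
have := @telescope (fun k => cindexR (f k) (f k.-1)) (fun k => crossR (f k.-1 * f k)) m.
rewrite /= hf0 hf1' => ->; first last.
- by rewrite hend cindexR0p.
- move=> k hk; have [e h] := heuc k hk.
  rewrite /=; exact: (cindexR_step _ _ _ _ _ (fk0 k hk) h e).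
rewrite -sumrN; apply: eq_big_nat => k hk.
have [e h] := heuc k hk.
exact: (crossR_step _ _ _ _ _ (fk0 k hk) h (sk k hk) e).
Qed.
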